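(* For any $C>1$, any odd $d\ge3$, and any $\eta\ge2$, there exists a forward-KL-regularized linear bandit instance of dimension $d$ such that $C^{\pi^*}=O(C)$ and $D^2_{\pi^*}=\Omega(Cd)$; consequently $D^2_{\pi^*}=\Omega(d\,C^{\pi^*})$.
   Context: A forward-KL-regularized linear bandit instance (single context) consists of a finite action set $\mathcal A$, a feature map $\phi:\mathcal A\to\mathbb R^d$, a parameter set $\Theta\subset\mathbb R^d$ defining the function class $\mathcal F=\{a\mapsto\langle\theta,\phi(a)\rangle:\theta\in\Theta\}$, a true parameter $\theta^*\in\Theta$ with mean reward $r(a)=\langle\theta^*,\phi(a)\rangle\in[0,1]$, a reference policy $\pi^{\mathrm{ref}}\in\Delta(\mathcal A)$ with full support, and $\eta>0$. The optimal policy is $\pi^*=\arg\max_{\pi\in\Delta(\mathcal A)}\sum_a r(a)\pi(a)-\eta^{-1}\mathrm{KL}(\pi^{\mathrm{ref}}\|\pi)$. $C^{\pi^*}=\max_a\pi^*(a)/\pi^{\mathrm{ref}}(a)$; $D^2(a)=\sup_{g,h\in\mathcal F}\frac{(g(a)-h(a))^2}{\mathbb E_{a'\sim\pi^{\mathrm{ref}}}[(g(a')-h(a'))^2]}$; $D^2_{\pi^*}=\mathbb E_{a\sim\pi^*}D^2(a)$. $O,\Omega$ hide absolute constants. *)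

(* Defs.v *)
From HB Require Import structures.
From mathcomp Require Import all_boot all_order all_algebra.
From mathcomp Require Import all_classical all_reals all_analysis.
Set Implicit Arguments. Unset Strict Implicit. Unset Printing Implicit Defensive.
Import Order.TTheory GRing.Theory Num.Theory.
Local Open Scope classical_set_scope.
Local Open Scope ring_scope.

Section KLBandit.
Variables (R : realType) (A : finType) (d : nat).

Definition linf (phi : A -> 'I_d -> R) (theta : 'I_d -> R) (a : A) : R :=
  \sum_(i < d) theta i * phi a i.

Definition is_dist (p : A -> R) : Prop :=
  (forall a, 0 <= p a) /\ \sum_(a : A) p a = 1.

Definition full_support (p : A -> R) : Prop := forall a, 0 < p a.

(* forward KL divergence KL(pref || p) = sum_a pref(a) ln (pref(a)/p(a)),
   used only for full-support p (otherwise it is +infinity). *)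
Definition KLfwd (pref p : A -> R) : R :=
  \sum_(a : A) pref a * ln (pref a / p a).

Definition objective (r : A -> R) (eta : R) (pref p : A -> R) : R :=
  \sum_(a : A) r a * p a - eta^-1 * KLfwd pref p.

(* p is an optimal policy (an argmax of the objective over Delta(A)).
   Policies without full support have KL = +infinity, hence objective
   -infinity, so they are never optimal and never compete. *)
Definition is_optimal (r : A -> R) (eta : R) (pref p : A -> R) : Prop :=
  is_dist p /\ full_support p /\
  forall q, is_dist q -> full_support q ->
    objective r eta pref q <= objective r eta pref p.

Definition conc_coef (pref p : A -> R) : R :=
  \big[Num.max/0]_(a : A) (p a / pref a).

(* ratio (g(a)-h(a))^2 / E_{a'~pref}[(g(a')-h(a'))^2] in \bar R,
   with the conventions 0/0 = 0 and x/0 = +oo for x > 0. *)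
Definition d2ratio (phi : A -> 'I_d -> R) (pref : A -> R)
    (t1 t2 : 'I_d -> R) (a : A) : \bar R :=
  let num := (linf phi t1 a - linf phi t2 a) ^+ 2 in
  let den := \sum_(a' : A) pref a' * (linf phi t1 a' - linf phi t2 a') ^+ 2 in
  if den == 0 then (if num == 0 then 0%E else +oo%E) else (num / den)%:E.

Definition D2 (phi : A -> 'I_d -> R) (Theta : set ('I_d -> R)) (pref : A -> R)
    (a : A) : \bar R :=
  ereal_sup [set x | exists t1, exists t2,
                       Theta t1 /\ Theta t2 /\ x = d2ratio phi pref t1 t2 a].

Definition D2pi (phi : A -> 'I_d -> R) (Theta : set ('I_d -> R))
    (pref p : A -> R) : \bar R :=
  (\sum_(a : A) (p a)%:E * D2 phi Theta pref a)%E.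

End KLBandit.

(* Main.v *)
Require Import Defs.
From HB Require Import structures.
From mathcomp Require Import all_boot all_order all_algebra.
From mathcomp Require Import all_classical all_reals all_analysis.
From mathcomp Require Import lra ring.
Import Order.TTheory GRing.Theory Num.Theory.
Local Open Scope classical_set_scope.
Local Open Scope ring_scope.

Lemma ln_le_sub1 (R : realType) (x : R) : 0 < x -> ln x <= x - 1.
Proof.
move=> x0; have := expR_ge1Dx (ln x); rewrite lnK ?posrE //; lra.
Qed.

Lemma ln_lt_sub1 (R : realType) (x : R) : 0 < x -> x != 1 -> ln x < x - 1.
Proof.
move=> x0 x1; have lx : ln x != 0 by rewrite ln_eq0.
have := expR_gt1Dx lx; rewrite lnK ?posrE //; lra.
Qed.

Section Opt.
Variables (R : realType) (A : finType) (r pref p : A -> R) (eta lam : R).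
Hypotheses (eta0 : 0 < eta) (dpref : is_dist pref) (fpref : full_support pref)
  (dp : is_dist p) (fp : full_support p)
  (hr : forall a, r a = lam - pref a / (eta * p a)).

Lemma obj_diff q : is_dist q -> full_support q ->
  objective r eta pref p - objective r eta pref q =
  eta^-1 * \sum_a pref a * (q a / p a - 1 - ln (q a / p a)).
Proof.
move=> [_ sq] fq.
rewrite /objective /KLfwd !mulr_sumr -!sumrB.
transitivity (\sum_a (eta^-1 * (pref a * (q a / p a - 1 - ln (q a / p a)))
   - lam * (q a - p a))).
  apply: eq_bigr => a _.
  have pa := fp a; have qa := fq a; have ra := fpref a.
  rewrite !ln_div ?posrE // hr.
  have e0 : eta != 0 by rewrite gt_eqF.
  have p0 : p a != 0 by rewrite gt_eqF.
  field; by rewrite e0 p0.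
rewrite big_split /= sumrN -mulr_sumr -mulr_sumr sumrB sq (proj2 dp) subrr mulr0 oppr0 addr0 //.
Qed.

Lemma term_ge0 q : full_support q -> forall a,
  0 <= pref a * (q a / p a - 1 - ln (q a / p a)).
Proof.
move=> fq a; apply: mulr_ge0; first exact: ltW.
have := @ln_le_sub1 _ _ (divr_gt0 (fq a) (fp a)); lra.
Qed.

Lemma p_optimal : is_optimal r eta pref p.
Proof.
split=> //; split=> // q dq fq.
rewrite -subr_ge0 obj_diff //; apply: mulr_ge0; first by rewrite invr_ge0 ltW.
by apply: sumr_ge0 => a _; apply: term_ge0.
Qed.

Lemma p_unique q : is_optimal r eta pref q -> q = p.
Proof.
move=> [dq [fq oq]]; have := oq p dp fp.
rewrite -subr_le0 obj_diff // => h.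
have S0 : \sum_a pref a * (q a / p a - 1 - ln (q a / p a)) = 0.
  apply/eqP; rewrite eq_le; apply/andP; split.
    have ie : 0 < eta^-1 by rewrite invr_gt0.
    by rewrite -(pmulr_rle0 _ ie).
  by apply: sumr_ge0 => a _; apply: term_ge0.
apply/funext => a.
have := @psumr_eq0P _ _ predT _ (fun b _ => @term_ge0 q fq b) S0 a isT.
move/eqP; rewrite mulf_eq0 gt_eqF //= => /eqP h2.
have qp : q a / p a == 1.
  apply/negPn/negP => ne.
  have := @ln_lt_sub1 _ _ (divr_gt0 (fq a) (fp a)) ne; lra.
move/eqP: qp => qp; have pa : p a != 0 by rewrite gt_eqF.
by rewrite -[q a](divfK pa) qp mul1r.
Qed.
End Opt.

Lemma linf_lift (R : realType) d (t : 'I_d -> R) (j : 'I_d) :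
  linf (fun (a : 'I_d.+1) k => ((a == lift ord0 k)%:R : R)) t (lift ord0 j) = t j.
Proof.
rewrite /linf (bigD1 j) //= eqxx mulr1 big1 ?addr0 // => k kj.
by rewrite (inj_eq (@lift_inj _ ord0)) eq_sym (negbTE kj) mulr0.
Qed.

Lemma linf_0 (R : realType) d (t : 'I_d -> R) :
  linf (fun (a : 'I_d.+1) k => ((a == lift ord0 k)%:R : R)) t ord0 = 0.
Proof.
by rewrite /linf big1 // => k _; rewrite (negbTE (neq_lift _ _)) mulr0.
Qed.

Lemma sum_ord1 (R : realType) d (F : 'I_d.+1 -> R) :
  \sum_a F a = F ord0 + \sum_(i < d) F (lift ord0 i).
Proof. by rewrite big_ord_recl. Qed.

Theorem propositionB1 (R : realType) :
  exists K1 K2 K3 : R, 0 < K1 /\ 0 < K2 /\ 0 < K3 /\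
  forall (C : R) (d : nat) (eta : R),
    1 < C -> odd d -> (3 <= d)%N -> 2 <= eta ->
    exists (A : finType) (phi : A -> 'I_d -> R) (Theta : set ('I_d -> R))
           (thetastar : 'I_d -> R) (pref : A -> R),
      Theta thetastar /\
      (forall a, 0 <= linf phi thetastar a <= 1) /\
      is_dist pref /\ full_support pref /\
      (exists pistar, is_optimal (linf phi thetastar) eta pref pistar) /\
      forall pistar, is_optimal (linf phi thetastar) eta pref pistar ->
        conc_coef pref pistar <= K1 * C /\
        ((K2 * C * d%:R)%:E <= D2pi phi Theta pref pistar)%E /\
        ((K3 * d%:R * conc_coef pref pistar)%:E <= D2pi phi Theta pref pistar)%E.
Proof.
exists 1, 1, 1; do 3 split => //.
move=> C d eta C1 _ d3 eta2.
have C0 : 0 < C by lra.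
have eta0 : 0 < eta by lra.
have dpos : 0 < (d%:R : R) by rewrite ltr0n; case: d d3.
set u := 2 * C - 1.
have u1 : 1 < u by rewrite /u; lra.
have u0 : 0 < u by lra.
set phi := fun (a : 'I_d.+1) k => ((a == lift ord0 k)%:R : R).
set th := fun _ : 'I_d => (2 - C^-1) / eta.
set pref := fun (a : 'I_d.+1) => if a == ord0 then (u - 1) / u else (d%:R * u)^-1.
set p := fun (a : 'I_d.+1) => if a == ord0 then (C - 1) / u else C / (d%:R * u).
have liftF (i : 'I_d) : (lift (ord0 : 'I_d.+1) i == ord0) = false.
  by rewrite eq_sym (negbTE (neq_lift _ _)).
have Ci : 0 < C^-1 < 1 by rewrite invr_gt0 C0 invf_lt1.
have fpref : full_support pref.
  move=> a; rewrite /pref; case: ifP => _.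
    by apply: divr_gt0 => //; lra.
  by rewrite invr_gt0 mulr_gt0.
have dpref : is_dist pref.
  split; first by move=> a; exact: ltW.
  have pl i : pref (lift ord0 i) = (d%:R * u)^-1 by rewrite /pref liftF.
  rewrite sum_ord1 (eq_bigr _ (fun i _ => pl i)) /pref eqxx.
  rewrite sumr_const card_ord /= -[_ *+ d]mulr_natr.
  field; rewrite gt_eqF // gt_eqF //.
have fp : full_support p.
  move=> a; rewrite /p; case: ifP => _.
    by apply: divr_gt0 => //; lra.
  by apply: divr_gt0 => //; rewrite mulr_gt0.
have dp : is_dist p.
  split; first by move=> a; exact: ltW.
  have pl i : p (lift ord0 i) = C / (d%:R * u) by rewrite /p liftF.
  rewrite sum_ord1 (eq_bigr _ (fun i _ => pl i)) /p eqxx.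
  rewrite sumr_const card_ord /= -[_ *+ d]mulr_natr.
  rewrite /u; field; rewrite gt_eqF // -/u gt_eqF //.
have pl i : p (lift ord0 i) = C / (d%:R * u) by rewrite /p liftF.
have prl i : pref (lift ord0 i) = (d%:R * u)^-1 by rewrite /pref liftF.
have r0 : linf phi th ord0 = 0 by rewrite /phi linf_0.
have rl i : linf phi th (lift ord0 i) = (2 - C^-1) / eta by rewrite /phi linf_lift.
have hr a : linf phi th a = 2 / eta - pref a / (eta * p a).
  case: (unliftP ord0 a) => [j ->|->].
    rewrite rl pl prl; field.
    by rewrite !gt_eqF.
  rewrite r0 /p /pref eqxx /u; field.
  by rewrite !gt_eqF //; lra.
exists ('I_d.+1 : finType), phi, setT, th, pref.
split => //; split.
  move=> a; case: (unliftP ord0 a) => [j ->|->]; last by rewrite r0 lexx ler01.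
  rewrite rl; apply/andP; split.
    by apply: divr_ge0; lra.
  by rewrite ler_pdivrMr // mul1r; lra.
split => //; split => //; split.
  by exists p; exact: (@p_optimal _ _ _ _ _ _ _ eta0 fpref dp fp hr).
move=> q /(@p_unique _ _ _ _ _ _ _ eta0 fpref dp fp hr) ->.
have cc : conc_coef pref p <= C.
  rewrite /conc_coef; apply: (big_ind (fun x => x <= C)) => //.
  - exact: ltW.
  - by move=> x y hx hy; rewrite ge_max hx hy.
  move=> a _; case: (unliftP ord0 a) => [j ->|->].
    rewrite pl prl.
    have -> : C / (d%:R * u) / (d%:R * u)^-1 = C.
      by field; rewrite !gt_eqF.
    by [].
  rewrite /p /pref eqxx /u.
  have -> : (C - 1) / (2 * C - 1) / ((2 * C - 1 - 1) / (2 * C - 1)) = 2^-1.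
    by field; rewrite !gt_eqF //; lra.
  lra.
have D2ge0 a : (0 <= D2 phi [set: 'I_d -> R] pref a)%E.
  apply: ereal_sup_ubound; exists (fun _ => 0), (fun _ => 0); do 2 split => //.
  by rewrite /d2ratio subrr expr0n /= eqxx big1 ?eqxx // => b _; rewrite subrr expr0n /= mulr0.
have D2l i : ((d%:R * u)%:E <= D2 phi [set: 'I_d -> R] pref (lift ord0 i))%E.
  apply: ereal_sup_ubound.
  exists (fun k => ((k == i)%:R : R)), (fun _ => 0); split; [by []|split; [by []|]].
  have z0 b : linf phi (fun _ => 0) b = 0.
    by rewrite /linf big1 // => k _; rewrite mul0r.
  have l1 j : linf phi (fun k => ((k == i)%:R : R)) (lift ord0 j) = (j == i)%:R.
    by rewrite /phi linf_lift.
  have l0 : linf phi (fun k => ((k == i)%:R : R)) ord0 = 0.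
    by rewrite /phi linf_0.
  have den : \sum_b pref b * (linf phi (fun k => ((k == i)%:R : R)) b
        - linf phi (fun _ => 0) b) ^+ 2 = (d%:R * u)^-1.
    rewrite sum_ord1 z0 l0 subrr expr0n /= mulr0 add0r (bigD1 i) //= z0 l1 eqxx.
    rewrite subr0 expr1n mulr1 big1 ?addr0 ?prl // => j ji.
    by rewrite z0 l1 (negbTE ji) subrr expr0n /= mulr0.
  rewrite /d2ratio den l1 z0 eqxx subr0 expr1n invr_eq0 mulf_eq0 !gt_eqF //=.
  by rewrite div1r invrK.
have Dl : ((C * d%:R)%:E <= D2pi phi [set: 'I_d -> R] pref p)%E.
  rewrite /D2pi big_ord_recl /=.
  apply: le_trans (leeDr _ (mule_ge0 _ (D2ge0 _))); last by rewrite lee_fin ltW.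
  have -> : (C * d%:R)%:E = (\sum_(i < d) (C%:E))%E.
    by rewrite sumEFin sumr_const card_ord mulr_natr.
  apply: lee_sum => i _.
  have -> : C%:E = ((p (lift ord0 i))%:E * (d%:R * u)%:E)%E.
    by rewrite -EFinM pl; congr (_%:E); field; rewrite !gt_eqF.
  by apply: lee_wpmul2l; [rewrite lee_fin ltW | apply: D2l].
split; first by rewrite mul1r.
split; first by rewrite mul1r.
apply: le_trans Dl; rewrite lee_fin mul1r mulrC ler_wpM2r //; exact: ltW.
Qed.
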